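(* Let $p\geq 5$ be an odd integer and $s=\frac2p$. For any even integer $n\geq 4$, \[ 2\left(n-\tfrac12\right)^s=2\left(n^2-n+\tfrac14\right)^{s/2}<A_{n,s}^{-1}<2\left(n^2-n+\tfrac34\right)^{s/2}, \] and for any odd integer $n\geq 3$, \[ -2\left(n^2-n+\tfrac34\right)^{s/2}<B_{n,s}^{-1}<-2\left(n^2-n+\tfrac14\right)^{s/2}=-2\left(n-\tfrac12\right)^s. \]
   Context: For an integer $n\geq1$ and real $0<s<1$: $A_{n,s}=\left(\frac{1}{n^s}-\frac{1}{(n+1)^s}\right)+\left(\frac{1}{(n+2)^s}-\frac{1}{(n+3)^s}\right)+\cdots$ and $B_{n,s}=\left(-\frac{1}{n^s}+\frac{1}{(n+1)^s}\right)+\left(-\frac{1}{(n+2)^s}+\frac{1}{(n+3)^s}\right)+\cdots$. *)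

(* Defs.v *)
From Stdlib Require Import Reals.
From Coquelicot Require Export Coquelicot.
Open Scope R_scope.

Definition rpow (x s : R) : R := Rpower x s.

(* A_{n,s} = sum_{k>=0} ( 1/(n+2k)^s - 1/(n+2k+1)^s ), grouped in pairs *)
Definition A_ns (n : nat) (s : R) : R :=
  Series (fun k : nat => / rpow (INR (n + 2 * k)) s - / rpow (INR (n + 2 * k + 1)) s).

(* B_{n,s} = sum_{k>=0} ( -1/(n+2k)^s + 1/(n+2k+1)^s ), grouped in pairs *)
Definition B_ns (n : nat) (s : R) : R :=
  Series (fun k : nat => - / rpow (INR (n + 2 * k)) s + / rpow (INR (n + 2 * k + 1)) s).

(* Main.v *)
Require Import Defs.
From Stdlib Require Import Reals.
From Coquelicot Require Import Coquelicot.
Open Scope R_scope.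
From Stdlib Require Import Lra.


Lemma Rpower1 y : Rpower 1 y = 1.
Proof. unfold Rpower; rewrite ln_1, Rmult_0_r; apply exp_0. Qed.

Lemma integ (F dF P dP : R -> R) x0 : 0 <= x0 ->
  (forall x, 0 <= x <= x0 -> is_derive F x (dF x)) ->
  (forall x, 0 <= x <= x0 -> is_derive P x (dP x)) ->
  (forall x, 0 <= x <= x0 -> dP x <= dF x) ->
  P x0 - P 0 <= F x0 - F 0.
Proof.
  intros H0 HF HP Hle.
  destruct (Req_dec x0 0) as [->|Hne]; [lra|].
  assert (Hlt : 0 < x0) by lra.
  destruct (MVT_cor2 (fun x => F x - P x) (fun x => dF x - dP x) 0 x0 Hlt) as [c [Hc Hc2]].
  - intros c Hc. apply is_derive_Reals.
    apply (is_derive_minus F P c (dF c) (dP c)); auto.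
  - specialize (Hle c ltac:(lra)).
    assert (0 <= (dF c - dP c) * (x0 - 0)) by (apply Rmult_le_pos; lra). lra.
Qed.

Lemma d_m a x : x < 1 -> is_derive (fun x => Rpower (1 - x) (-a)) x (a * Rpower (1 - x) (-(a+1))).
Proof.
  intros Hx.
  assert (H := is_derive_comp (fun y => Rpower y (-a)) (fun x => 1 - x) x ((-a) * Rpower (1 - x) (-a - 1)) (-1)).
  replace (a * Rpower (1 - x) (- (a + 1))) with (scal (-1) ((-a) * Rpower (1 - x) (-a - 1))).
  apply H. apply is_derive_Reals, derivable_pt_lim_power; lra.
  auto_derive; auto; ring.
  unfold scal; simpl; unfold mult; simpl. replace (-a-1) with (-(a+1)) by ring. ring.
Qed.
Lemma d_p a x : -1 < x -> is_derive (fun x => Rpower (1 + x) (-a)) x (- a * Rpower (1 + x) (-(a+1))).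
Proof.
  intros Hx.
  assert (H := is_derive_comp (fun y => Rpower y (-a)) (fun x => 1 + x) x ((-a) * Rpower (1 + x) (-a - 1)) 1).
  replace (- a * Rpower (1 + x) (- (a + 1))) with (scal 1 ((-a) * Rpower (1 + x) (-a - 1))).
  apply H. apply is_derive_Reals, derivable_pt_lim_power; lra.
  auto_derive; auto; ring.
  unfold scal; simpl; unfold mult; simpl. replace (-a-1) with (-(a+1)) by ring. ring.
Qed.

Definition Om a x := Rpower (1 - x) (-a) - Rpower (1 + x) (-a).
Definition Ep a x := Rpower (1 - x) (-a) + Rpower (1 + x) (-a).

Lemma dOm a x : -1 < x < 1 -> is_derive (Om a) x (a * Ep (a+1) x).
Proof.
  intros Hx. unfold Om, Ep.
  replace (a * (Rpower (1 - x) (- (a + 1)) + Rpower (1 + x) (- (a + 1))))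
    with (minus (a * Rpower (1 - x) (- (a + 1))) (- a * Rpower (1 + x) (- (a + 1)))).
  apply (is_derive_minus (fun x => Rpower (1 - x) (-a)) (fun x => Rpower (1 + x) (-a))).
  apply d_m; lra. apply d_p; lra.
  unfold minus, plus, opp; simpl. ring.
Qed.

Lemma dEp a x : -1 < x < 1 -> is_derive (Ep a) x (a * Om (a+1) x).
Proof.
  intros Hx. unfold Om, Ep.
  replace (a * (Rpower (1 - x) (- (a + 1)) - Rpower (1 + x) (- (a + 1))))
    with (plus (a * Rpower (1 - x) (- (a + 1))) (- a * Rpower (1 + x) (- (a + 1)))).
  apply (is_derive_plus (fun x => Rpower (1 - x) (-a)) (fun x => Rpower (1 + x) (-a))).
  apply d_m; lra. apply d_p; lra.
  unfold plus; simpl. ring.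
Qed.

Lemma Om0 a : Om a 0 = 0.
Proof. unfold Om. replace (1-0) with 1 by ring. replace (1+0) with 1 by ring. ring. Qed.
Lemma Ep0 a : Ep a 0 = 2.
Proof. unfold Ep. replace (1-0) with 1 by ring. replace (1+0) with 1 by ring. rewrite Rpower1. ring. Qed.

Lemma F0 a x : 0 <= a -> 0 <= x < 1 -> 0 <= Om a x.
Proof.
  intros Ha Hx. unfold Om. rewrite !Rpower_Ropp.
  assert (0 < Rpower (1 - x) a) by (unfold Rpower; apply exp_pos).
  assert (Rpower (1 - x) a <= Rpower (1 + x) a) by (apply Rle_Rpower_l; lra).
  assert (/ Rpower (1 + x) a <= / Rpower (1 - x) a) by (apply Rinv_le_contravar; lra).
  lra.
Qed.

Lemma F1 a x : 0 <= a -> 0 <= x < 1 -> 2 <= Ep a x.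
Proof.
  intros Ha Hx.
  assert (H : 2 - 2 <= Ep a x - Ep a 0).
  { refine (integ (Ep a) (fun y => a * Om (a+1) y) (fun _ => 2) (fun _ => 0) x _ _ _ _); [lra| | |].
    - intros y Hy; apply dEp; lra.
    - intros y Hy; auto_derive; auto.
    - intros y Hy. apply Rmult_le_pos; [lra|]. apply F0; lra. }
  rewrite Ep0 in H. simpl in H. lra.
Qed.

Lemma exple x y : x <= y -> exp x <= exp y.
Proof. intros H; destruct (Rle_lt_or_eq_dec _ _ H) as [h|h]; [left; apply exp_increasing; auto| subst; lra]. Qed.

Lemma F2 a x : 0 <= a -> 0 <= x < 1 -> 2 * a * x <= Om a x.
Proof.
  intros Ha Hx.
  assert (H : 2*a*x - 2*a*0 <= Om a x - Om a 0).
  { refine (integ (Om a) (fun y => a * Ep (a+1) y) (fun y => 2*a*y) (fun _ => 2*a) x _ _ _ _); [lra| | |].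
    - intros y Hy; apply dOm; lra.
    - intros y Hy; auto_derive; auto; ring.
    - intros y Hy. assert (2 <= Ep (a+1) y) by (apply F1; lra). nra. }
  rewrite Om0 in H. lra.
Qed.

Lemma F3 a x : 0 <= a -> 0 <= x < 1 -> 2 + a*(a+1)*x^2 <= Ep a x.
Proof.
  intros Ha Hx.
  assert (H : (2 + a*(a+1)*x^2) - (2 + a*(a+1)*0^2) <= Ep a x - Ep a 0).
  { refine (integ (Ep a) (fun y => a * Om (a+1) y) (fun y => 2 + a*(a+1)*y^2) (fun y => 2*a*(a+1)*y) x _ _ _ _); [lra| | |].
    - intros y Hy; apply dEp; lra.
    - intros y Hy; auto_derive; auto; ring.
    - intros y Hy. assert (2*(a+1)*y <= Om (a+1) y) by (apply F2; lra).
      assert (a * (2*(a+1)*y) <= a * Om (a+1) y) by (apply Rmult_le_compat_l; lra). nra. }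
  rewrite Ep0 in H. lra.
Qed.

Lemma F4 a x : 0 <= a -> 0 <= x < 1 -> 2*a*x + a*(a+1)*(a+2)*x^3/3 <= Om a x.
Proof.
  intros Ha Hx.
  assert (H : (2*a*x + a*(a+1)*(a+2)*x^3/3) - (2*a*0 + a*(a+1)*(a+2)*0^3/3) <= Om a x - Om a 0).
  { refine (integ (Om a) (fun y => a * Ep (a+1) y) (fun y => 2*a*y + a*(a+1)*(a+2)*y^3/3) (fun y => a*(2 + (a+1)*(a+2)*y^2)) x _ _ _ _); [lra| | |].
    - intros y Hy; apply dOm; lra.
    - intros y Hy; auto_derive; auto; field.
    - intros y Hy. assert (2 + (a+1)*(a+1+1)*y^2 <= Ep (a+1) y) by (apply F3; lra).
      apply Rmult_le_compat_l; lra. }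
  rewrite Om0 in H. lra.
Qed.

Lemma G0 a x : 0 <= a <= 6 -> 0 <= x <= 2/7 -> Ep a x <= 9.
Proof.
  intros Ha Hx. unfold Ep.
  assert (Rpower (1 + x) (-a) <= 1).
  { rewrite Rpower_Ropp.
    assert (h : Rpower (1+x) 0 <= Rpower (1+x) a) by (apply Rle_Rpower; lra).
    rewrite Rpower_O in h by lra.
    assert (h2 := Rinv_le_contravar 1 (Rpower (1+x) a) ltac:(lra) h). rewrite Rinv_1 in h2. exact h2. }
  assert (Rpower (1 - x) (-a) <= 8).
  { unfold Rpower.
    assert (0 <= - ln (1 - x) <= ln (7/5)).
    { rewrite <- ln_Rinv by lra. split.
      - rewrite <- ln_1. apply ln_le; [lra|].
        assert (h2 := Rinv_le_contravar (1-x) 1 ltac:(lra) ltac:(lra)). rewrite Rinv_1 in h2. exact h2.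
      - apply ln_le. apply Rinv_0_lt_compat; lra.
        replace (7/5) with (/ (5/7)) by field. apply Rinv_le_contravar; lra. }
    apply Rle_trans with (exp (INR 6 * ln (7/5))).
    - apply exple. simpl INR. nra.
    - change (exp (INR 6 * ln (7/5))) with (Rpower (7/5) (INR 6)). rewrite Rpower_pow by lra. simpl. lra. }
  lra.
Qed.

Lemma G1 a x : 0 <= a <= 5 -> 0 <= x <= 2/7 -> Om a x <= 9*a*x.
Proof.
  intros Ha Hx.
  assert (H : Om a x - Om a 0 <= 9*a*x - 9*a*0).
  { refine (integ (fun y => 9*a*y) (fun _ => 9*a) (Om a) (fun y => a * Ep (a+1) y) x _ _ _ _); [lra| | |].
    - intros y Hy; auto_derive; auto; ring.
    - intros y Hy; apply dOm; lra.
    - intros y Hy. assert (Ep (a+1) y <= 9) by (apply G0; lra). nra. }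
  rewrite Om0 in H. lra.
Qed.

Lemma G2 a x : 0 <= a <= 4 -> 0 <= x <= 2/7 -> Ep a x <= 2 + 9*a*(a+1)*x^2/2.
Proof.
  intros Ha Hx.
  assert (H : Ep a x - Ep a 0 <= (2 + 9*a*(a+1)*x^2/2) - (2 + 9*a*(a+1)*0^2/2)).
  { refine (integ (fun y => 2 + 9*a*(a+1)*y^2/2) (fun y => a*(9*(a+1)*y)) (Ep a) (fun y => a * Om (a+1) y) x _ _ _ _); [lra| | |].
    - intros y Hy; auto_derive; auto; field.
    - intros y Hy; apply dEp; lra.
    - intros y Hy. assert (Om (a+1) y <= 9*(a+1)*y) by (apply G1; lra).
      apply Rmult_le_compat_l; lra. }
  rewrite Ep0 in H. lra.
Qed.

Lemma G3 a x : 0 <= a <= 3 -> 0 <= x <= 2/7 -> Om a x <= 2*a*x + 9*a*(a+1)*(a+2)*x^3/6.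
Proof.
  intros Ha Hx.
  assert (H : Om a x - Om a 0 <= (2*a*x + 9*a*(a+1)*(a+2)*x^3/6) - (2*a*0 + 9*a*(a+1)*(a+2)*0^3/6)).
  { refine (integ (fun y => 2*a*y + 9*a*(a+1)*(a+2)*y^3/6) (fun y => a*(2 + 9*(a+1)*(a+1+1)*y^2/2)) (Om a) (fun y => a * Ep (a+1) y) x _ _ _ _); [lra| | |].
    - intros y Hy; auto_derive; auto; field.
    - intros y Hy; apply dOm; lra.
    - intros y Hy. assert (Ep (a+1) y <= 2 + 9*(a+1)*(a+1+1)*y^2/2) by (apply G2; lra).
      apply Rmult_le_compat_l; lra. }
  rewrite Om0 in H. lra.
Qed.

Lemma G4 a x : 0 <= a <= 2 -> 0 <= x <= 2/7 -> Ep a x <= 2 + a*(a+1)*x^2 + 9*a*(a+1)*(a+2)*(a+3)*x^4/24.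
Proof.
  intros Ha Hx.
  assert (H : Ep a x - Ep a 0 <= (2 + a*(a+1)*x^2 + 9*a*(a+1)*(a+2)*(a+3)*x^4/24) - (2 + a*(a+1)*0^2 + 9*a*(a+1)*(a+2)*(a+3)*0^4/24)).
  { refine (integ (fun y => 2 + a*(a+1)*y^2 + 9*a*(a+1)*(a+2)*(a+3)*y^4/24)
       (fun y => a*(2*(a+1)*y + 9*(a+1)*(a+1+1)*(a+1+2)*y^3/6)) (Ep a) (fun y => a * Om (a+1) y) x _ _ _ _); [lra| | |].
    - intros y Hy; auto_derive; auto; field.
    - intros y Hy; apply dEp; lra.
    - intros y Hy. assert (Om (a+1) y <= 2*(a+1)*y + 9*(a+1)*(a+1+1)*(a+1+2)*y^3/6) by (apply G3; lra).
      apply Rmult_le_compat_l; lra. }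
  rewrite Ep0 in H. lra.
Qed.

Lemma G5 a x : 0 <= a <= 1 -> 0 <= x <= 2/7 ->
  Om a x <= 2*a*x + a*(a+1)*(a+2)*x^3/3 + 9*a*(a+1)*(a+2)*(a+3)*(a+4)*x^5/120.
Proof.
  intros Ha Hx.
  assert (H : Om a x - Om a 0 <= (2*a*x + a*(a+1)*(a+2)*x^3/3 + 9*a*(a+1)*(a+2)*(a+3)*(a+4)*x^5/120)
     - (2*a*0 + a*(a+1)*(a+2)*0^3/3 + 9*a*(a+1)*(a+2)*(a+3)*(a+4)*0^5/120)).
  { refine (integ (fun y => 2*a*y + a*(a+1)*(a+2)*y^3/3 + 9*a*(a+1)*(a+2)*(a+3)*(a+4)*y^5/120)
       (fun y => a*(2 + (a+1)*(a+1+1)*y^2 + 9*(a+1)*(a+1+1)*(a+1+2)*(a+1+3)*y^4/24)) (Om a) (fun y => a * Ep (a+1) y) x _ _ _ _); [lra| | |].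
    - intros y Hy; auto_derive; auto; field.
    - intros y Hy; apply dOm; lra.
    - intros y Hy. assert (Ep (a+1) y <= 2 + (a+1)*(a+1+1)*y^2 + 9*(a+1)*(a+1+1)*(a+1+2)*(a+1+3)*y^4/24) by (apply G4; lra).
      apply Rmult_le_compat_l; lra. }
  rewrite Om0 in H. lra.
Qed.

Lemma pw_le1 a x : 0 <= a -> 0 <= x -> Rpower (1 + x) (-a) <= 1.
Proof.
  intros Ha Hx. rewrite Rpower_Ropp.
  assert (h : Rpower (1+x) 0 <= Rpower (1+x) a) by (apply Rle_Rpower; lra).
  rewrite Rpower_O in h by lra.
  assert (h2 := Rinv_le_contravar 1 (Rpower (1+x) a) ltac:(lra) h). rewrite Rinv_1 in h2. exact h2.
Qed.

Lemma pw_le8 a x : 0 <= a <= 6 -> 0 <= x <= 2/7 -> Rpower (1 - x) (-a) <= 8.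
Proof.
  intros Ha Hx.
  { unfold Rpower.
    assert (0 <= - ln (1 - x) <= ln (7/5)).
    { rewrite <- ln_Rinv by lra. split.
      - rewrite <- ln_1. apply ln_le; [lra|].
        assert (h2 := Rinv_le_contravar (1-x) 1 ltac:(lra) ltac:(lra)). rewrite Rinv_1 in h2. exact h2.
      - apply ln_le. apply Rinv_0_lt_compat; lra.
        replace (7/5) with (/ (5/7)) by field. apply Rinv_le_contravar; lra. }
    apply Rle_trans with (exp (INR 6 * ln (7/5))).
    - apply exple. simpl INR. nra.
    - change (exp (INR 6 * ln (7/5))) with (Rpower (7/5) (INR 6)). rewrite Rpower_pow by lra. simpl. lra. }
Qed.

Lemma T1 r x : 0 <= r -> 0 <= x -> 1 - r*x <= Rpower (1 + x) (-r).
Proof.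
  intros Hr Hx.
  assert (H : (1 - r*x) - (1 - r*0) <= Rpower (1 + x) (-r) - Rpower (1 + 0) (-r)).
  { refine (integ (fun y => Rpower (1 + y) (-r)) (fun y => - r * Rpower (1 + y) (-(r+1)))
       (fun y => 1 - r*y) (fun _ => -r) x _ _ _ _); [lra| | |].
    - intros y Hy; apply d_p; lra.
    - intros y Hy; auto_derive; auto; ring.
    - intros y Hy. assert (Rpower (1 + y) (-(r+1)) <= 1) by (apply pw_le1; lra). nra. }
  replace (1+0) with 1 in H by ring. rewrite Rpower1 in H. lra.
Qed.

Lemma T2 r x : 0 <= r -> 0 <= x -> Rpower (1 + x) (-r) <= 1 - r*x + r*(r+1)*x^2/2.
Proof.
  intros Hr Hx.
  assert (H : Rpower (1 + x) (-r) - Rpower (1 + 0) (-r) <= (1 - r*x + r*(r+1)*x^2/2) - (1 - r*0 + r*(r+1)*0^2/2)).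
  { refine (integ (fun y => 1 - r*y + r*(r+1)*y^2/2) (fun y => -r + r*(r+1)*y)
       (fun y => Rpower (1 + y) (-r)) (fun y => - r * Rpower (1 + y) (-(r+1))) x _ _ _ _); [lra| | |].
    - intros y Hy; auto_derive; auto; field.
    - intros y Hy; apply d_p; lra.
    - intros y Hy. assert (1 - (r+1)*y <= Rpower (1 + y) (-(r+1))) by (apply T1; lra). nra. }
  replace (1+0) with 1 in H by ring. rewrite Rpower1 in H. lra.
Qed.

Lemma scl s c y : 0 < c -> 0 < y -> / Rpower (c * y) s = / Rpower c s * Rpower y (-s).
Proof.
  intros Hc Hy. rewrite <- Rpower_mult_distr by auto. rewrite Rinv_mult, Rpower_Ropp. reflexivity.
Qed.

Lemma UPc s c : 0 < s <= 2/5 -> 7/2 <= c ->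
  / Rpower (c - 1/2) s - / Rpower (c + 1/2) s < (1/2) * (/ Rpower (c - 1) s - / Rpower (c + 1) s).
Proof.
  intros Hs Hc. set (u := / c).
  assert (Hu : 0 < u <= 2/7).
  { unfold u; split. apply Rinv_0_lt_compat; lra.
    replace (2/7) with (/ (7/2)) by field. apply Rinv_le_contravar; lra. }
  replace (c - 1/2) with (c * (1 - u/2)) by (unfold u; field; lra).
  replace (c + 1/2) with (c * (1 + u/2)) by (unfold u; field; lra).
  replace (c - 1) with (c * (1 - u)) by (unfold u; field; lra).
  replace (c + 1) with (c * (1 + u)) by (unfold u; field; lra).
  rewrite !scl by lra.
  assert (HC : 0 < / Rpower c s) by (apply Rinv_0_lt_compat; unfold Rpower; apply exp_pos).
  assert (H1 := F4 s u ltac:(lra) ltac:(lra)).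
  assert (H2 := G5 s (u/2) ltac:(lra) ltac:(lra)).
  assert (H3 : 2 * Om s (u/2) < Om s u).
  { assert (0 < s*(s+1)*(s+2)) by (apply Rmult_lt_0_compat; [apply Rmult_lt_0_compat|]; lra).
    assert (0 < s*(s+1)*(s+2) * (u^3/4 - 9*(s+3)*(s+4)*u^5/1920)).
    { apply Rmult_lt_0_compat; auto.
      assert (u^2 <= 4/49) by nra. assert ((s+3)*(s+4) <= 16) by nra.
      assert (0 < u^3) by (apply pow_lt; lra).
      assert (9*(s+3)*(s+4)*u^5/1920 <= u^3 * (9*16*(4/49)/1920)).
      { replace (9*(s+3)*(s+4)*u^5/1920) with (u^3 * (9*((s+3)*(s+4))*u^2/1920)) by (clearbody u; field).
        apply Rmult_le_compat_l; [lra|]. nra. }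
      lra. }
    assert (E : (2*s*u + s*(s+1)*(s+2)*u^3/3) - 2*(2*s*(u/2) + s*(s+1)*(s+2)*(u/2)^3/3 + 9*s*(s+1)*(s+2)*(s+3)*(s+4)*(u/2)^5/120)
      = s*(s+1)*(s+2) * (u^3/4 - 9*(s+3)*(s+4)*u^5/1920)) by (clearbody u; field).
    lra. }
  unfold Om in H3. nra.
Qed.

Lemma pw_shift y a k : 0 < y -> Rpower y (-(a + INR k)) = Rpower y (-a) / y^k.
Proof.
  intros Hy. replace (-(a + INR k)) with (-a + - INR k) by ring.
  rewrite Rpower_plus, (Rpower_Ropp y (INR k)), Rpower_pow by auto. reflexivity.
Qed.

Lemma sq_pw y s : 0 < y -> / Rpower (y^2) (s/2) = / Rpower y s.
Proof.
  intros Hy. rewrite <- (Rpower_pow 2 y) by auto. rewrite Rpower_mult.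
  simpl INR. replace ((1+1)*(s/2)) with s by field. reflexivity.
Qed.

Lemma pos_pw y a : 0 < Rpower y a.
Proof. unfold Rpower; apply exp_pos. Qed.

Lemma LOc s c : 0 < s <= 2/5 -> 7/2 <= c ->
  (1/2) * (/ Rpower ((c-1)^2 + 1/2) (s/2) - / Rpower ((c+1)^2 + 1/2) (s/2))
  < / Rpower (c - 1/2) s - / Rpower (c + 1/2) s.
Proof.
  intros Hs Hc. set (u := / c).
  assert (Hu : 0 < u <= 2/7).
  { unfold u; split. apply Rinv_0_lt_compat; lra.
    replace (2/7) with (/ (7/2)) by field. apply Rinv_le_contravar; lra. }
  set (x1 := u^2 / (2*(1-u)^2)). set (x2 := u^2 / (2*(1+u)^2)).
  assert (Hx1 : 0 <= x1) by (unfold x1; apply Rmult_le_pos; [nra| apply Rlt_le, Rinv_0_lt_compat; nra]).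
  assert (Hx2 : 0 <= x2) by (unfold x2; apply Rmult_le_pos; [nra| apply Rlt_le, Rinv_0_lt_compat; nra]).
  replace ((c-1)^2 + 1/2) with ((c-1)^2 * (1 + x1)) by (unfold x1, u; field; lra).
  replace ((c+1)^2 + 1/2) with ((c+1)^2 * (1 + x2)) by (unfold x2, u; field; lra).
  rewrite !scl by (try apply pow_lt; lra).
  rewrite !sq_pw by lra.
  replace (c - 1/2) with (c * (1 - u/2)) by (unfold u; field; lra).
  replace (c + 1/2) with (c * (1 + u/2)) by (unfold u; field; lra).
  replace (c - 1) with (c * (1 - u)) by (unfold u; field; lra).
  replace (c + 1) with (c * (1 + u)) by (unfold u; field; lra).
  rewrite !scl by lra.
  set (C := / Rpower c s).
  assert (HC : 0 < C) by (apply Rinv_0_lt_compat; apply pos_pw).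
  set (Pm := Rpower (1 - u) (-s)). set (Pp := Rpower (1 + u) (-s)).
  assert (HPm : 0 < Pm) by apply pos_pw. assert (HPp : 0 < Pp) by apply pos_pw.
  assert (E1 := T2 (s/2) x1 ltac:(lra) Hx1).
  assert (E2 := T1 (s/2) x2 ltac:(lra) Hx2).
  assert (K : Pm * Rpower (1 + x1) (-(s/2)) - Pp * Rpower (1 + x2) (-(s/2)) < 2 * Om s (u/2)).
  { assert (B1 : Pm * Rpower (1 + x1) (-(s/2)) <= Pm * (1 - (s/2)*x1 + (s/2)*((s/2)+1)*x1^2/2)) by (apply Rmult_le_compat_l; lra).
    assert (B2 : Pp * (1 - (s/2)*x2) <= Pp * Rpower (1 + x2) (-(s/2))) by (apply Rmult_le_compat_l; lra).
    assert (Q1 : Pm * x1 = u^2/2 * Rpower (1 - u) (-(s + INR 2))).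
    { rewrite pw_shift by lra. unfold x1, Pm. field. lra. }
    assert (Q2 : Pp * x2 = u^2/2 * Rpower (1 + u) (-(s + INR 2))).
    { rewrite pw_shift by lra. unfold x2, Pp. field. lra. }
    assert (Q3 : Pm * x1^2 = u^4/4 * Rpower (1 - u) (-(s + INR 4))).
    { rewrite pw_shift by lra. unfold x1, Pm. field. lra. }
    assert (M4 : Rpower (1 - u) (-(s + INR 4)) <= 8) by (apply pw_le8; simpl; lra).
    assert (O2 : Om (s + INR 2) u = Rpower (1 - u) (-(s + INR 2)) - Rpower (1 + u) (-(s + INR 2))) by reflexivity.
    assert (HF := F4 (s + INR 2) u ltac:(simpl; lra) ltac:(lra)).
    assert (HG := G5 s u ltac:(lra) ltac:(lra)).
    assert (HH := F4 s (u/2) ltac:(lra) ltac:(lra)).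
    assert (L : Pm * Rpower (1 + x1) (-(s/2)) - Pp * Rpower (1 + x2) (-(s/2))
       <= Om s u - (s/2) * (u^2/2) * Om (s + INR 2) u + (s/2)*((s/2)+1)/2 * (u^4/4) * 8).
    { unfold Om at 1. fold Pm Pp.
      assert (0 <= u^4) by (apply pow_le; lra).
      assert (0 < (s/2)*((s/2)+1)/2) by nra.
      assert ((s/2)*((s/2)+1)/2 * (u^4/4 * Rpower (1 - u) (-(s + INR 4))) <= (s/2)*((s/2)+1)/2 * (u^4/4 * 8)) by
        (apply Rmult_le_compat_l; [lra|]; apply Rmult_le_compat_l; lra).
      clearbody Pm Pp x1 x2. rewrite O2.
      replace (Pm * (1 - (s/2)*x1 + (s/2)*((s/2)+1)*x1^2/2)) with (Pm - (s/2)*(Pm*x1) + (s/2)*((s/2)+1)/2*(Pm*x1^2)) in B1 by field.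
      replace (Pp * (1 - (s/2)*x2)) with (Pp - (s/2)*(Pp*x2)) in B2 by field.
      rewrite Q1, Q2, Q3 in *. nra. }
    clearbody u. replace (INR 2) with 2 in * by (simpl; ring). replace (INR 4) with 4 in * by (simpl; ring).
    set (O1 := Om (s+2) u) in *. set (Oh := Om s (u/2)) in *. set (Ou := Om s u) in *.
    assert (P : 0 < s*u^3 * ((s+2)*((1-s)/4 - u/4 + (s+3)*(s+4)*u^2*(1 - 9*s)/120))).
    { apply Rmult_lt_0_compat. apply Rmult_lt_0_compat; [lra| apply pow_lt; lra].
      apply Rmult_lt_0_compat; [lra|].
      assert (u^2 <= 4/49) by nra.
      assert ((s+3)*(s+4)*(1-9*s) >= -40) by nra.
      assert ((s+3)*(s+4)*u^2*(1 - 9*s)/120 >= -(4/49)*40/120).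
      { destruct (Rle_lt_dec 0 (1 - 9*s)).
        - assert (0 <= (s+3)*(s+4)*(1-9*s)) by (apply Rmult_le_pos; nra). nra.
        - nra. }
      lra. }
    assert (Eq : 2 * (2*s*(u/2) + s*(s+1)*(s+2)*(u/2)^3/3)
       - (2*s*u + s*(s+1)*(s+2)*u^3/3 + 9*s*(s+1)*(s+2)*(s+3)*(s+4)*u^5/120)
       + (s/2)*(u^2/2)*(2*(s+2)*u + (s+2)*(s+2+1)*(s+2+2)*u^3/3) - (s/2)*((s/2)+1)/2*(u^4/4)*8
       = s*u^3 * ((s+2)*((1-s)/4 - u/4 + (s+3)*(s+4)*u^2*(1 - 9*s)/120))) by field.
    assert ((s/2) * (u^2/2) * (2*(s+2)*u + (s+2)*(s+2+1)*(s+2+2)*u^3/3) <= (s/2) * (u^2/2) * O1).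
    { apply Rmult_le_compat_l; [|exact HF]. apply Rmult_le_pos; nra. }
    lra. }
  unfold Om in K. nra.
Qed.

Lemma tele_up (a U : nat -> R) : (forall k, 0 <= a k) -> (forall k, a k <= U k - U (S k)) ->
  (forall k, 0 <= U k) -> ex_series a /\ Series a <= U 0%nat.
Proof.
  intros Ha HU HU0.
  assert (Hs : forall K, sum_n a K <= U 0%nat - U (S K)).
  { induction K. rewrite sum_O. apply HU. rewrite sum_Sn. unfold plus; simpl.
    specialize (HU (S K)). lra. }
  assert (Hinc : forall K, sum_n a K <= sum_n a (S K)).
  { intros K. rewrite sum_Sn. unfold plus; simpl. specialize (Ha (S K)). lra. }
  destruct (ex_finite_lim_seq_incr (sum_n a) (U 0%nat) Hinc) as [l Hl].
  { intros K. specialize (Hs K). specialize (HU0 (S K)). lra. }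
  assert (Hser : is_series a l) by exact Hl.
  split. exists l. exact Hser.
  rewrite (is_series_unique a l Hser).
  assert (H := is_lim_seq_le (sum_n a) (fun _ => U 0%nat) l (U 0%nat)).
  simpl in H. apply H; auto.
  intros K. specialize (Hs K). specialize (HU0 (S K)). lra.
  apply is_lim_seq_const.
Qed.

Lemma tele_lo (a L : nat -> R) : ex_series a -> (forall k, L k - L (S k) <= a k) ->
  is_lim_seq L 0 -> L 0%nat <= Series a.
Proof.
  intros [l Hl] HL Hlim.
  assert (Hs : forall K, L 0%nat - L (S K) <= sum_n a K).
  { induction K. rewrite sum_O. apply HL. rewrite sum_Sn. unfold plus; simpl.
    specialize (HL (S K)). lra. }
  rewrite (is_series_unique a l Hl).
  assert (H := is_lim_seq_le (fun K => L 0%nat - L (S K)) (sum_n a) (L 0%nat - 0) l Hs).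
  replace (L 0%nat) with (L 0%nat - 0) by ring. apply H; [|exact Hl].
  apply is_lim_seq_minus'. apply is_lim_seq_const.
  apply (is_lim_seq_incr_1 L 0). exact Hlim.
Qed.

Lemma lim_pw s : 0 < s -> is_lim_seq (fun k => / Rpower (INR k + 1) s) 0.
Proof.
  intros Hs.
  replace (Finite 0) with (Rbar_inv p_infty) by reflexivity.
  apply is_lim_seq_inv; [|discriminate].
  apply is_lim_seq_spec. intros M. simpl.
  set (M' := Rmax 0 M).
  destruct (INR_unbounded (exp (M' / s))) as [N HN].
  exists N. intros n Hn.
  assert (INR N <= INR n) by (apply le_INR; exact Hn).
  assert (h1 : exp (M'/s) < INR n + 1) by lra.
  assert (h2 : M'/s < ln (INR n + 1)).
  { rewrite <- (ln_exp (M'/s)). apply ln_increasing; [apply exp_pos|exact h1]. }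
  unfold Rpower.
  assert (M' < s * ln (INR n + 1)).
  { apply (Rmult_lt_compat_l s) in h2; [|lra]. replace (s * (M'/s)) with M' in h2 by (field; lra). exact h2. }
  assert (exp M' < exp (s * ln (INR n + 1))) by (apply exp_increasing; auto).
  assert (1 + M' <= exp M') by apply exp_ineq1_le.
  assert (M <= M') by apply Rmax_r. lra.
Qed.

Lemma UPx s x : 0 < s <= 2/5 -> 3 <= x ->
  / Rpower x s - / Rpower (x+1) s < (1/2) * (/ Rpower (x - 1/2) s - / Rpower (x + 2 - 1/2) s).
Proof.
  intros Hs Hx. assert (H := UPc s (x + 1/2) Hs ltac:(lra)).
  replace (x + 1/2 - 1/2) with x in H by field. replace (x + 1/2 + 1/2) with (x+1) in H by field.
  replace (x + 1/2 - 1) with (x - 1/2) in H by field. replace (x + 1/2 + 1) with (x + 2 - 1/2) in H by field.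
  exact H.
Qed.

Lemma LOx s x : 0 < s <= 2/5 -> 3 <= x ->
  (1/2) * (/ Rpower (x^2 - x + 3/4) (s/2) - / Rpower ((x+2)^2 - (x+2) + 3/4) (s/2))
  < / Rpower x s - / Rpower (x+1) s.
Proof.
  intros Hs Hx. assert (H := LOc s (x + 1/2) Hs ltac:(lra)).
  replace (x + 1/2 - 1/2) with x in H by field. replace (x + 1/2 + 1/2) with (x+1) in H by field.
  replace ((x + 1/2 - 1)^2 + 1/2) with (x^2 - x + 3/4) in H by field.
  replace ((x + 1/2 + 1)^2 + 1/2) with ((x+2)^2 - (x+2) + 3/4) in H by field.
  exact H.
Qed.

Lemma inv_pw_lt x y s : 0 < s -> 0 < x < y -> / Rpower y s < / Rpower x s.
Proof.
  intros Hs Hxy. apply Rinv_lt_contravar.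
  apply Rmult_lt_0_compat; apply pos_pw.
  apply Rlt_Rpower_l; lra.
Qed.

Lemma inv_pw_le x y s : 0 <= s -> 0 < x <= y -> / Rpower y s <= / Rpower x s.
Proof.
  intros Hs Hxy. apply Rinv_le_contravar. apply pos_pw.
  apply Rle_Rpower_l; lra.
Qed.


Lemma A_bounds s n : 0 < s <= 2/5 -> (3 <= n)%nat ->
  (1/2) * / Rpower (INR n ^ 2 - INR n + 3/4) (s/2) < A_ns n s /\
  A_ns n s < (1/2) * / Rpower (INR n - 1/2) s.
Proof.
  intros Hs Hn.
  assert (HN : 3 <= INR n) by (replace 3 with (INR 3) by (simpl; field); apply le_INR; exact Hn).
  set (y := fun k : nat => INR n + 2 * INR k).
  set (a := fun k => / Rpower (y k) s - / Rpower (y k + 1) s).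
  assert (HA : A_ns n s = Series a).
  { unfold A_ns, rpow. apply Series_ext. intros k. unfold a, y.
    rewrite !plus_INR, mult_INR. replace (INR 2) with 2 by (simpl; field). simpl INR. reflexivity. }
  assert (Hy : forall k, 3 + 2 * INR k <= y k) by (intros k; unfold y; lra).
  assert (Hk0 : forall k, 0 <= INR k) by apply pos_INR.
  assert (HyS : forall k, y (S k) = y k + 2) by (intros k; unfold y; rewrite S_INR; field).
  set (U := fun k => (1/2) * / Rpower (y k - 1/2) s).
  set (L := fun k => (1/2) * / Rpower ((y k)^2 - y k + 3/4) (s/2)).
  assert (Ha0 : forall k, 0 <= a k).
  { intros k. unfold a. assert (h := inv_pw_lt (y k) (y k + 1) s ltac:(lra) ltac:(specialize (Hy k); specialize (Hk0 k); lra)). lra. }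
  assert (HaU : forall k, a k < U k - U (S k)).
  { intros k. unfold a, U. rewrite HyS. assert (h := UPx s (y k) Hs ltac:(specialize (Hy k); specialize (Hk0 k); lra)). lra. }
  assert (HU0 : forall k, 0 <= U k).
  { intros k. unfold U. apply Rmult_le_pos; [lra|]. apply Rlt_le, Rinv_0_lt_compat, pos_pw. }
  assert (HaL : forall k, L k - L (S k) < a k).
  { intros k. unfold a, L. rewrite HyS. assert (h := LOx s (y k) Hs ltac:(specialize (Hy k); specialize (Hk0 k); lra)). lra. }
  assert (HL : is_lim_seq L 0).
  { apply is_lim_seq_le_le with (u := fun _ => 0) (w := fun k => (1/2) * / Rpower (INR k + 1) s).
    - intros k. unfold L. split.
      + apply Rmult_le_pos; [lra|]. apply Rlt_le, Rinv_0_lt_compat, pos_pw.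
      + apply Rmult_le_compat_l; [lra|].
        rewrite <- (sq_pw (INR k + 1) s) by (specialize (Hk0 k); lra).
        apply inv_pw_le; [lra|]. specialize (Hy k); specialize (Hk0 k). split. nra. nra.
    - apply is_lim_seq_const.
    - replace (Finite 0) with (Rbar_mult (1/2) 0) by (simpl; f_equal; ring).
      apply is_lim_seq_scal_l. apply lim_pw; lra. }
  assert (Hup := tele_up a U Ha0 (fun k => Rlt_le _ _ (HaU k)) HU0).
  destruct Hup as [Hex _].
  assert (Hup1 := tele_up (fun k => a (S k)) (fun k => U (S k)) (fun k => Ha0 (S k)) (fun k => Rlt_le _ _ (HaU (S k))) (fun k => HU0 (S k))).
  destruct Hup1 as [Hex1 Hb1].
  assert (Hlo1 := tele_lo (fun k => a (S k)) (fun k => L (S k)) Hex1 (fun k => Rlt_le _ _ (HaL (S k)))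
      (proj1 (is_lim_seq_incr_1 L 0) HL)).
  rewrite HA, (Series_incr_1 a Hex).
  specialize (HaU 0%nat). specialize (HaL 0%nat).
  assert (Ey : y 0%nat = INR n) by (unfold y; simpl; field).
  unfold U, L in *. rewrite Ey in *. cbv beta in Hb1, Hlo1. split; lra.
Qed.

Lemma sq_pw' y s : 0 < y -> Rpower (y^2) (s/2) = Rpower y s.
Proof.
  intros Hy. rewrite <- (Rpower_pow 2 y) by auto. rewrite Rpower_mult.
  simpl INR. replace ((1+1)*(s/2)) with s by field. reflexivity.
Qed.

Lemma A_inv s n : 0 < s <= 2/5 -> (3 <= n)%nat ->
  2 * rpow (INR n - 1/2) s = 2 * rpow (INR n ^ 2 - INR n + 1/4) (s / 2) /\
  2 * rpow (INR n ^ 2 - INR n + 1/4) (s / 2) < / A_ns n s /\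
  / A_ns n s < 2 * rpow (INR n ^ 2 - INR n + 3/4) (s / 2).
Proof.
  intros Hs Hn.
  assert (HN : 3 <= INR n) by (replace 3 with (INR 3) by (simpl; field); apply le_INR; exact Hn).
  destruct (A_bounds s n Hs Hn) as [Hlo Hup].
  unfold rpow.
  assert (E : Rpower (INR n ^ 2 - INR n + 1/4) (s/2) = Rpower (INR n - 1/2) s).
  { replace (INR n ^ 2 - INR n + 1/4) with ((INR n - 1/2)^2) by field. apply sq_pw'. lra. }
  rewrite E.
  set (P := Rpower (INR n - 1/2) s) in *. set (Q := Rpower (INR n ^ 2 - INR n + 3/4) (s/2)) in *.
  assert (HP : 0 < P) by apply pos_pw. assert (HQ : 0 < Q) by apply pos_pw.
  assert (HQ' : 0 < 1/2 * / Q) by (apply Rmult_lt_0_compat; [lra| apply Rinv_0_lt_compat; lra]).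
  assert (HP' : 0 < 1/2 * / P) by (apply Rmult_lt_0_compat; [lra| apply Rinv_0_lt_compat; lra]).
  split; [reflexivity|]. split.
  - replace (2 * P) with (/ (1/2 * / P)) by (field; lra).
    apply Rinv_lt_contravar; [|exact Hup]. apply Rmult_lt_0_compat; lra.
  - replace (2 * Q) with (/ (1/2 * / Q)) by (field; lra).
    apply Rinv_lt_contravar; [|exact Hlo]. apply Rmult_lt_0_compat; lra.
Qed.

Lemma B_A n s : B_ns n s = - A_ns n s.
Proof.
  unfold B_ns, A_ns. rewrite <- Series_opp. apply Series_ext. intros k. lra.
Qed.

Theorem lemma4p2 (p : nat) (hp5 : (5 <= p)%nat) (hpodd : Nat.odd p = true) :
  let s := 2 / INR p in
  (forall n : nat, (4 <= n)%nat -> Nat.even n = true ->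
     2 * rpow (INR n - 1/2) s = 2 * rpow (INR n ^ 2 - INR n + 1/4) (s / 2) /\
     2 * rpow (INR n ^ 2 - INR n + 1/4) (s / 2) < / A_ns n s /\
     / A_ns n s < 2 * rpow (INR n ^ 2 - INR n + 3/4) (s / 2)) /\
  (forall n : nat, (3 <= n)%nat -> Nat.odd n = true ->
     - 2 * rpow (INR n ^ 2 - INR n + 3/4) (s / 2) < / B_ns n s /\
     / B_ns n s < - 2 * rpow (INR n ^ 2 - INR n + 1/4) (s / 2) /\
     - 2 * rpow (INR n ^ 2 - INR n + 1/4) (s / 2) = - 2 * rpow (INR n - 1/2) s).
Proof.
  intros s.
  assert (Hp : 5 <= INR p) by (replace 5 with (INR 5) by (simpl; field); apply le_INR; exact hp5).
  assert (Hs : 0 < s <= 2/5).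
  { unfold s. split. apply Rdiv_lt_0_compat; lra.
    unfold Rdiv. apply Rmult_le_compat_l; [lra|]. replace (/5) with (/5) by reflexivity.
    apply Rinv_le_contravar; lra. }
  split.
  - intros n Hn _. apply A_inv; auto. apply (Nat.le_trans _ 4); auto.
  - intros n Hn _. destruct (A_inv s n Hs Hn) as [E [H1 H2]].
    rewrite B_A, Rinv_opp. lra.
Qed.
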